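(* Let $q\in(0,1)$, let $\alpha,p,j\ge0$ be integers, and let $b_n=q^n[n+\alpha+1]_q+q^{n+\alpha}[n]_q$ and $\lambda_n=q^{2n+\alpha-1}[n]_q[n+\alpha]_q$. Then $$\sum_{\omega\in\mathrm{Mot}_{p,j,j}}\mathrm{wt}_{b,\lambda}(\omega)=\sum_{M\in M^{(\alpha)}_{p,j}(p)}q^{\mathrm{cr}(M)}.$$
   Context: $[n]_q=\frac{1-q^n}{1-q}$. Motzkin paths: a Motzkin path is a sequence $(s_0,\dots,s_n)$ of points $s_i=(x_i,y_i)\in\mathbb{Z}^2$ with all $y_i\ge0$ such that each step $(s_i,s_{i+1})$ is an East step ($+(1,0)$), a North-East step ($+(1,1)$) or a South-East step ($+(1,-1)$); the step has height $k$ if $y_i=k$. $\mathrm{Mot}_{n,k,l}$ is the set of Motzkin paths from $(0,k)$ to $(n,l)$. An East step of height $k$ has weight $b_k$, a North-East step weight $1$, a South-East step of height $k$ weight $\lambda_k$; $\mathrm{wt}_{b,\lambda}(\omega)$ is the product of the step weights. Bipartite matchings: for integers $n,j,\alpha\ge0$, let $T_-=\{-\alpha-j,\dots,-1\}$, $T_+=\{1,\dots,n\}$ (top row), $B_-=\{-\tilde j,\dots,-\tilde 1\}$, $B_+=\{\tilde1,\dots,\tilde n\}$ (bottom row; $\tilde m$ is a formal copy of the integer $m$, and bottom vertices are compared via these integers). A bipartite matching is a set partition of $T_-\cup T_+\cup B_-\cup B_+$ into singletons (isolated vertices) and blocks $\{a,\tilde b\}$ with $a$ top, $\tilde b$ bottom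 (edges, written $(a,\tilde b)$). $M^{(\alpha)}_{n,j}$ is the set of such matchings with no edge between $T_-$ and $B_-$; $M^{(\alpha)}_{n,j}(l)$ its subset with exactly $l$ edges. The crossing number $\mathrm{cr}(M)$ is the total number of: (C1) unordered pairs of edges $(a,\tilde b),(c,\tilde d)$ with $a<c$ and $d<b$; (C2) pairs of an edge $(a,\tilde b)$ and an isolated top vertex $c$ with $c<a$; (C3) pairs of an edge $(a,\tilde b)$ and an isolated bottom vertex $\tilde d$ with $d<b$. *)

(* Defs.v *)
From mathcomp Require Import all_boot all_order all_algebra.
Set Implicit Arguments. Unset Strict Implicit. Unset Printing Implicit Defensive.
Import Order.TTheory GRing.Theory Num.Theory.
Local Open Scope ring_scope.

Definition qint (R : fieldType) (q : R) (n : nat) : R := (1 - q ^+ n) / (1 - q).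

(* A step is an element of 'I_3 : 0 = South-East, 1 = East, 2 = North-East.
   A path of length n is an n.-tuple of steps; it is determined by its starting
   height k, so Mot_{n,k,l} is the set of step sequences of length n that never
   go below height 0 starting from height k and end at height l. *)
Fixpoint motz_ok (k l : nat) (s : seq 'I_3) : bool :=
  match s with
  | [::] => k == l
  | st :: s' =>
      if val st == 0%N then (0 < k)%N && motz_ok k.-1 l s'
      else if val st == 1%N then motz_ok k l s'
      else motz_ok k.+1 l s'
  end.

Fixpoint motz_wt (R : ringType) (b lam : nat -> R) (k : nat) (s : seq 'I_3) : R :=
  match s with
  | [::] => 1
  | st :: s' =>
      if val st == 0%N then lam k * motz_wt b lam k.-1 s'
      else if val st == 1%N then b k * motz_wt b lam k s'
      else motz_wt b lam k.+1 s'
  end.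

Definition motzkin_sum (R : ringType) (b lam : nat -> R) (n k l : nat) : R :=
  \sum_(t : n.-tuple 'I_3 | motz_ok k l t) motz_wt b lam k t.

(* Top row T_- ∪ T_+ = {-a-j,...,-1} ∪ {1,...,n} indexed by 'I_(a+j+n);
   bottom row B_- ∪ B_+ = {-j,...,-1} ∪ {1,...,n} indexed by 'I_(j+n).
   The integer labels are given by top_lbl / bot_lbl. *)
Definition top_lbl (a j : nat) (i : nat) : int :=
  if (i < a + j)%N then (i%:Z - (a + j)%:Z)%R else (i%:Z - (a + j)%:Z + 1)%R.
Definition bot_lbl (j : nat) (i : nat) : int :=
  if (i < j)%N then (i%:Z - j%:Z)%R else (i%:Z - j%:Z + 1)%R.

Section Matchings.
Variables (a n j : nat).
Definition topT := 'I_(a + j + n).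
Definition botT := 'I_(j + n).
Definition edgeT := (topT * botT)%type.

Definition top_neg (x : topT) : bool := (top_lbl a j x < 0)%R.
Definition bot_neg (y : botT) : bool := (bot_lbl j y < 0)%R.

Definition is_matching (M : {set edgeT}) : bool :=
  [forall e1 in M, forall e2 in M,
     ((e1.1 == e2.1) || (e1.2 == e2.2)) ==> (e1 == e2)] &&
  [forall e in M, ~~ (top_neg e.1 && bot_neg e.2)].

Definition top_isolated (M : {set edgeT}) (x : topT) : bool :=
  [forall e in M, e.1 != x].
Definition bot_isolated (M : {set edgeT}) (y : botT) : bool :=
  [forall e in M, e.2 != y].

Definition cr1 (M : {set edgeT}) : nat :=
  #|[set p : edgeT * edgeT | (p.1 \in M) && (p.2 \in M) &&
       (top_lbl a j p.1.1 < top_lbl a j p.2.1)%R &&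
       (bot_lbl j p.2.2 < bot_lbl j p.1.2)%R]|.
Definition cr2 (M : {set edgeT}) : nat :=
  #|[set p : edgeT * topT | (p.1 \in M) && top_isolated M p.2 &&
       (top_lbl a j p.2 < top_lbl a j p.1.1)%R]|.
Definition cr3 (M : {set edgeT}) : nat :=
  #|[set p : edgeT * botT | (p.1 \in M) && bot_isolated M p.2 &&
       (bot_lbl j p.2 < bot_lbl j p.1.2)%R]|.
Definition crossing (M : {set edgeT}) : nat := (cr1 M + cr2 M + cr3 M)%N.

Definition matching_sum (R : ringType) (q : R) (l : nat) : R :=
  \sum_(M : {set edgeT} | is_matching M && (#|M| == l)) q ^+ crossing M.
End Matchings.

(* Main.v *)
Require Import Defs.
From mathcomp Require Import all_boot all_order all_algebra.
Set Warnings "-notation-overridden,-ambiguous-paths,-deprecated".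
From mathcomp Require Import zify ring lra.
Import Order.TTheory GRing.Theory Num.Theory.
Set Implicit Arguments. Unset Strict Implicit. Unset Printing Implicit Defensive.

Ltac elimeq := repeat match goal with
  | |- context [(?x == ?y)%N] =>
  first [ rewrite (_ : (x == y) = true); last by apply/eqP; lia
        | rewrite (_ : (x == y) = false); last by apply/eqP; lia ]
  | |- context [(?x <= ?y)%N] =>
  first [ rewrite (_ : (x <= y)%N = true); last by lia
        | rewrite (_ : (x <= y)%N = false); last by lia ]
  end; rewrite /= ?if_same ?mulr0n ?mulr1n.

Section Mot.
Local Open Scope ring_scope.
Variable R : comRingType.
Variables (b lam : nat -> R).

Fixpoint mot (n k l : nat) : R :=
  match n with
  | 0 => (k == l)%:R
  | n'.+1 => (if (0 < k)%N then lam k * mot n' k.-1 l else 0)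
             + b k * mot n' k l + mot n' k.+1 l
  end.

Lemma motzkin_sumE n k l : motzkin_sum b lam n k l = mot n k l.
Proof.
elim: n k => [|n IH] k.
  rewrite /motzkin_sum big_mkcond /=.
  rewrite (eq_bigr (fun _ => if motz_ok k l [tuple] then motz_wt b lam k [tuple] else 0)).
    rewrite sumr_const card_tuple /= expn0 mulr1n /=.
    by case: eqP => _.
  by move=> t _; rewrite (tuple0 t).
rewrite /motzkin_sum big_mkcond /=.
pose h := fun p : 'I_3 * n.-tuple 'I_3 => [tuple of p.1 :: p.2].
rewrite (reindex h) /=; last first.
  exists (fun t : n.+1.-tuple 'I_3 => (thead t, [tuple of behead t])).
    by move=> [x t] _; rewrite /h /=; congr (_, _); apply: val_inj.
  move=> t _; rewrite /h /=; apply: val_inj => /=.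
  by case: t => [[|x s] //= _].
rewrite -(pair_bigA _ (fun x t => if motz_ok k l (h (x, t)) then motz_wt b lam k (h (x, t)) else 0)) /=.
rewrite !big_ord_recl big_ord0 addr0 /=.
rewrite -!IH /motzkin_sum !big_mkcond /=.
rewrite addrA; congr (_ + _ + _).
- case: k => [|k] /=; first by rewrite big1.
  by rewrite mulr_sumr [RHS]big_mkcond; apply: eq_bigr => t _; case: ifP; rewrite ?mulr0.
- by rewrite mulr_sumr [RHS]big_mkcond; apply: eq_bigr => t _; case: ifP; rewrite ?mulr0.
- by rewrite [RHS]big_mkcond.
Qed.
Lemma motS n k l : mot n.+1 k l =
  (if (0 < k)%N then lam k * mot n k.-1 l else 0) + b k * mot n k l + mot n k.+1 l.
Proof. by []. Qed.

Lemma mot_last n k l : mot n.+1 k l =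
  (if (0 < l)%N then mot n k l.-1 else 0) + b l * mot n k l + lam l.+1 * mot n k l.+1.
Proof.
elim: n k l => [|n IH] k l.
  rewrite motS /=.
  case: (ltngtP k l) => h.
  - case: (eqVneq k.+1 l) => [<-|/eqP h']; elimeq; try destruct k; try destruct l; elimeq; ring.
  - case: (eqVneq k l.+1) => [->|/eqP h']; elimeq; try destruct k; try destruct l; elimeq; ring.
  - subst; elimeq; try destruct l; elimeq; ring.
rewrite [LHS]motS [in LHS]IH [in LHS]IH [in LHS]IH [in RHS]motS [in RHS]motS [in RHS]motS.
case: k => [|k]; case: l => [|l] /=; ring.
Qed.

Lemma mot_big n k l : (n + k < l)%N -> mot n k l = 0.
Proof.
elim: n k => [|n IH] k hl /=.
  by elimeq.
rewrite (IH k); last lia.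
rewrite (IH k.+1); last lia.
case: k hl => [|k] hl /=; rewrite ?mulr0 ?addr0 //.
rewrite IH ?mulr0 ?addr0 //; lia.
Qed.
End Mot.

Lemma sum_bool (I : finType) (P : pred I) : (\sum_(i : I) P i)%N = #|P|.
Proof.
rewrite -sum1_card [RHS]big_mkcond /=; apply: eq_bigr => i _; rewrite [i \in _]unfold_in; by case: (P i).
Qed.

Section Match.
Variables (tn bn : nat).
Section TB.
Variables (T B : nat).
Implicit Types (M N : {set 'I_T * 'I_B}).

Definition okm M := [forall e1 in M, forall e2 in M,
   ((e1.1 == e2.1) || (e1.2 == e2.2)) ==> (e1 == e2)] &&
  [forall e in M, ~~ ((e.1 < tn)%N && (e.2 < bn)%N)].
Definition tiso M (x : 'I_T) := [forall e in M, e.1 != x].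
Definition biso M (y : 'I_B) := [forall e in M, e.2 != y].
Definition xcr1 M : nat := (\sum_(e1 in M) \sum_(e2 in M) ((e1.1 < e2.1) && (e2.2 < e1.2)))%N.
Definition xcr2 M : nat := (\sum_(e in M) \sum_(x : 'I_T) (tiso M x && (x < e.1)))%N.
Definition xcr3 M : nat := (\sum_(e in M) \sum_(y : 'I_B) (biso M y && (y < e.2)))%N.
Definition xcrm M := (xcr1 M + xcr2 M + xcr3 M)%N.

Lemma okmP M : reflect
  ((forall e1 e2, e1 \in M -> e2 \in M -> (e1.1 = e2.1 \/ e1.2 = e2.2) -> e1 = e2) /\
   (forall e, e \in M -> ~~ ((e.1 < tn)%N && (e.2 < bn)%N))) (okm M).
Proof.
apply: (iffP andP) => [[/forallP H1 /forallP H2]|[H1 H2]]; split.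
- move=> e1 e2 i1 i2 h; move: (H1 e1); rewrite i1 /= => /forallP /(_ e2).
  by rewrite i2 /= => /implyP; case: h => ->; rewrite eqxx ?orbT => /(_ isT) /eqP.
- by move=> e ie; move: (H2 e); rewrite ie.
- apply/forallP => e1; apply/implyP => i1; apply/forallP => e2; apply/implyP => i2.
  apply/implyP => /orP h; apply/eqP; apply: H1 => //; by case: h => /eqP; auto.
- by apply/forallP => e; apply/implyP; apply: H2.
Qed.

Lemma tisoP M x : tiso M x = (x \notin [set e.1 | e in M]).
Proof.
apply/forallP/negP => [H /imsetP [e ie ex]|H e]; first by move: (H e); rewrite ie ex eqxx.
by apply/implyP => ie; apply/eqP => ex; apply: H; apply/imsetP; exists e.
Qed.

Lemma bisoP M y : biso M y = (y \notin [set e.2 | e in M]).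
Proof.
apply/forallP/negP => [H /imsetP [e ie ex]|H e]; first by move: (H e); rewrite ie ex eqxx.
by apply/implyP => ie; apply/eqP => ex; apply: H; apply/imsetP; exists e.
Qed.

Lemma card_tiso M : okm M -> (\sum_(x : 'I_T) tiso M x)%N = (T - #|M|)%N.
Proof.
move=> /okmP [H1 _]; rewrite sum_bool.
have -> : #|tiso M| = #|~: [set e.1 | e in M]|.
  by apply: eq_card => x; rewrite in_setC -tisoP.
have := cardsC [set e.1 | e in M]; rewrite card_in_imset ?card_ord.
  set a := #|~: _|; set m := #|M|; move: a m => a m; lia.
by move=> e1 e2 i1 i2 h; apply: H1 => //; left.
Qed.

Lemma card_biso M : okm M -> (\sum_(y : 'I_B) biso M y)%N = (B - #|M|)%N.
Proof.
move=> /okmP [H1 _]; rewrite sum_bool.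
have -> : #|biso M| = #|~: [set e.2 | e in M]|.
  by apply: eq_card => x; rewrite in_setC -bisoP.
have := cardsC [set e.2 | e in M]; rewrite card_in_imset ?card_ord.
  set a := #|~: _|; set m := #|M|; move: a m => a m; lia.
by move=> e1 e2 i1 i2 h; apply: H1 => //; right.
Qed.

Lemma okm_card M : okm M -> (#|M| <= B)%N.
Proof.
move=> /okmP [H1 _]; have := cardsC [set e.2 | e in M]; rewrite card_in_imset ?card_ord.
  set a := #|~: _|; set m := #|M|; move: a m => a m; lia.
by move=> e1 e2 i1 i2 h; apply: H1 => //; right.
Qed.

End TB.
End Match.

Section Rank.
Local Open Scope ring_scope.
Variable (R : fieldType) (q : R) (hq : q != 1).

Lemma qintS n : qint q n.+1 = qint q n + q ^+ n.
Proof.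
rewrite /qint exprS.
have h : 1 - q != 0 by rewrite subr_eq0 eq_sym.
by field.
Qed.

Lemma sum_rank B (S : pred 'I_B) :
  \sum_(d : 'I_B | S d) q ^+ (\sum_(y : 'I_B) (S y && (y < d)))%N = qint q #|S|.
Proof.
elim: B S => [|B IH] S.
  rewrite big_ord0 (_ : #|S| = 0%N); last by apply: eq_card0 => -[].
  by rewrite /qint expr0 subrr mul0r.
rewrite big_mkcond big_ord_recr /=.
pose S' := fun y : 'I_B => S (widen_ord (leqnSn B) y).
have cS : #|S| = (#|S'| + S ord_max)%N.
  by rewrite -!sum_bool big_ord_recr.
rewrite cS.
case: (S ord_max) => /=; last first.
  rewrite addn0 addr0 -(IH S') [RHS]big_mkcond; apply: eq_bigr => d _; rewrite /S'; case: ifP => // _.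
  by rewrite big_ord_recr /= [(B < d)%N]ltnNge (ltnW (ltn_ord d)) andbF addn0.
rewrite addn1 qintS -(IH S') [X in _ = X + _]big_mkcond /=; congr (_ + _).
  apply: eq_bigr => d _; rewrite /S'; case: ifP => // _.
  by rewrite big_ord_recr /= [(B < d)%N]ltnNge (ltnW (ltn_ord d)) andbF addn0.
rewrite big_ord_recr /= ltnn andbF addn0 -sum_bool.
by congr (q ^+ _); apply: eq_bigr => y _; rewrite ltn_ord andbT.
Qed.
End Rank.

Lemma forall_setU1 (X : finType) (a : X) (A : {set X}) (P : pred X) :
  [forall e in a |: A, P e] = P a && [forall e in A, P e].
Proof.
apply/forallP/andP => [H|[Pa /forallP H] e].
  split; first by have := H a; rewrite setU11.
  by apply/forallP => e; apply/implyP => eA; have := H e; rewrite in_setU1 eA orbT.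
apply/implyP; rewrite in_setU1 => /orP [/eqP ->//|eA].
by have := H e; rewrite eA.
Qed.

Lemma forall_imset (X Y : finType) (f : X -> Y) (A : {set X}) (P : pred Y) :
  [forall e in f @: A, P e] = [forall x in A, P (f x)].
Proof.
apply/forallP/forallP => H x.
  by apply/implyP => xA; have := H (f x); rewrite imset_f.
apply/implyP => /imsetP [y yA ->]; by have := H y; rewrite yA.
Qed.

Lemma forall_andb (X : finType) (A : {pred X}) (P Q : pred X) :
  [forall x in A, P x && Q x] = [forall x in A, P x] && [forall x in A, Q x].
Proof.
apply/forallP/andP => [H|[/forallP H1 /forallP H2] x].
  by split; apply/forallP => x; apply/implyP => xA; have := H x; rewrite xA => /andP [].
by apply/implyP => xA; have := H1 x; have := H2 x; rewrite xA /= => -> ->.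
Qed.

Section Ext.
Variables (tn bn T B : nat).
Hypothesis hT : (tn <= T)%N.
Implicit Types N : {set 'I_T * 'I_B}.

Definition wid (e : 'I_T * 'I_B) : 'I_T.+1 * 'I_B := (widen_ord (leqnSn T) e.1, e.2).
Lemma wid_inj : injective wid.
Proof. by move=> [x y] [x' y'] [/val_inj -> ->]. Qed.

Definition ext (N : {set 'I_T * 'I_B}) (o : option 'I_B) : {set 'I_T.+1 * 'I_B} :=
  if o is Some d then (ord_max, d) |: (wid @: N) else wid @: N.

Lemma new_notin N d : (ord_max, d) \notin wid @: N.
Proof.
apply/imsetP => -[e _ /(congr1 (fun p => val p.1))] /= h.
by have := ltn_ord e.1; rewrite -h ltnn.
Qed.

Lemma sum_ext N o (F : 'I_T.+1 * 'I_B -> nat) :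
  (\sum_(e in ext N o) F e = (if o is Some d then F (ord_max, d) else 0) + \sum_(e in N) F (wid e))%N.
Proof.
case: o => [d|] /=; last by rewrite big_imset //; move=> x y _ _; apply: wid_inj.
rewrite big_setU1 ?new_notin // big_imset //; move=> x y _ _; apply: wid_inj.
Qed.

Lemma tiso_ext N o x : tiso (ext N o) (widen_ord (leqnSn T) x) = tiso N x.
Proof.
rewrite /tiso; case: o => [d|] /=; rewrite ?forall_setU1 forall_imset //=.
rewrite (_ : (ord_max != _) = true) //; apply/eqP => /(congr1 val) /= h.
by have := ltn_ord x; rewrite -h ltnn.
Qed.

Lemma tiso_ext_max N o : tiso (ext N o) ord_max = (o == None).
Proof.
rewrite /tiso; case: o => [d|] /=; rewrite ?forall_setU1 ?eqxx //.
apply/forallP => e; apply/implyP => /imsetP [e' _ ->]; apply/eqP => /(congr1 val) /= h.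
by have := ltn_ord e'.1; rewrite h ltnn.
Qed.

Lemma biso_ext N o y : biso (ext N o) y = biso N y && (if o is Some d then d != y else true).
Proof.
rewrite /biso; case: o => [d|] /=; rewrite ?forall_setU1 forall_imset ?andbT //=.
by rewrite andbC.
Qed.

Lemma max_neq x : (ord_max == widen_ord (leqnSn T) x) = false.
Proof. by apply/eqP => /(congr1 val) /= h; have := ltn_ord x; rewrite -h ltnn. Qed.
Lemma widen_eq x y : (widen_ord (leqnSn T) x == widen_ord (leqnSn T) y) = (x == y).
Proof. by apply/eqP/eqP => [/(congr1 val) /= /val_inj|->]. Qed.
Lemma neq_max x : (widen_ord (leqnSn T) x == ord_max) = false.
Proof. by rewrite eq_sym max_neq. Qed.
Lemma wid_eq x y : (wid x == wid y) = (x == y).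
Proof. exact: (inj_eq wid_inj). Qed.
Lemma wid_max x d : (wid x == (ord_max, d)) = false.
Proof. by rewrite /wid xpair_eqE eq_sym max_neq. Qed.
Lemma max_wid x d : ((ord_max, d) == wid x) = false.
Proof. by rewrite eq_sym wid_max. Qed.

Lemma okm_ext N o : okm tn bn (ext N o) = okm tn bn N && (if o is Some d then biso N d else true).
Proof.
rewrite /okm; case: o => [d|] /=; rewrite ?forall_setU1 !forall_imset /=.
  rewrite !eqxx /=.
  under eq_forallb => x do rewrite max_neq max_wid /=.
  set F1 := [forall x in N, _ ==> false].
  under eq_forallb => x do rewrite forall_setU1 forall_imset /=.
  under eq_forallb => x do rewrite neq_max wid_max /=.
  under eq_forallb => x do under eq_forallb => y do rewrite widen_eq wid_eq.
  rewrite forall_andb.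
  have -> : F1 = biso N d.
    by apply: eq_forallb => x; rewrite eq_sym.
  have -> : [forall x in N, (x.2 == d) ==> false] = biso N d by [].
  rewrite (_ : (T < tn)%N = false) /=; last by apply/negbTE; rewrite -leqNgt.
  by case: (biso N d); case: [forall x in N, _ ]; case: [forall x in N, ~~ _].
under eq_forallb => x do rewrite forall_imset /=.
under eq_forallb => x do under eq_forallb => y do rewrite widen_eq wid_eq.
by rewrite andbT.
Qed.


Lemma card_ext N o : #|ext N o| = (#|N| + (if o is Some _ then 1 else 0))%N.
Proof.
case: o => [d|] /=; last by rewrite addn0 card_imset //; apply: wid_inj.
rewrite cardsU1 new_notin card_imset; [by rewrite addnC | exact: wid_inj].
Qed.

Lemma sum2_ext N o (F : 'I_T.+1 * 'I_B -> 'I_T.+1 * 'I_B -> nat) :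
  (\sum_(e1 in ext N o) \sum_(e2 in ext N o) F e1 e2 =
   (if o is Some d then F (ord_max, d) (ord_max, d) + \sum_(e in N) F (ord_max, d) (wid e)
      + \sum_(e in N) F (wid e) (ord_max, d) else 0)
   + \sum_(e1 in N) \sum_(e2 in N) F (wid e1) (wid e2))%N.
Proof.
rewrite sum_ext (eq_bigr (fun e => (if o is Some d then F (wid e) (ord_max,d) else 0)
   + \sum_(e2 in N) F (wid e) (wid e2))%N); last by move=> e _; rewrite sum_ext.
rewrite big_split /=; case: o => [d|]; last by rewrite /= big1 ?add0n.
by rewrite sum_ext /= !addnA.
Qed.

Lemma xcr1_ext N o : xcr1 (ext N o) =
  ((if o is Some d then \sum_(e in N) (d < e.2) else 0) + xcr1 N)%N.
Proof.
rewrite /xcr1 sum2_ext /=; congr (_ + _)%N; case: o => [d|] //=.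
rewrite ltnn /= add0n big1 ?add0n; last first.
  by move=> e _; rewrite ltnNge (ltnW (ltn_ord e.1)).
by apply: eq_bigr => e _; rewrite ltn_ord.
Qed.

Lemma inner2_ext N o (e : 'I_T.+1 * 'I_B) :
  (\sum_(x : 'I_T.+1) (tiso (ext N o) x && (x < e.1)) = \sum_(x : 'I_T) (tiso N x && (x < e.1)))%N.
Proof.
rewrite big_ord_recr /= tiso_ext_max ltnNge -ltnS ltn_ord andbF addn0.
by apply: eq_bigr => x _; rewrite tiso_ext.
Qed.

Lemma sum_ext_some N d (F : 'I_T.+1 * 'I_B -> nat) :
  (\sum_(e in ext N (Some d)) F e = F (ord_max, d) + \sum_(e in N) F (wid e))%N.
Proof. exact: (sum_ext N (Some d) F). Qed.

Lemma sum_ext_none N (F : 'I_T.+1 * 'I_B -> nat) :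
  (\sum_(e in ext N None) F e = \sum_(e in N) F (wid e))%N.
Proof. exact: (sum_ext N None F). Qed.

Lemma xcr2_ext N o : xcr2 (ext N o) =
  ((if o is Some d then \sum_(x : 'I_T) tiso N x else 0) + xcr2 N)%N.
Proof.
rewrite /xcr2; case: o => [d|].
  rewrite sum_ext_some inner2_ext; under eq_bigr => e _ do rewrite inner2_ext.
  congr (_ + _)%N; apply: eq_bigr => x _; by rewrite ltn_ord andbT.
rewrite sum_ext_none add0n; under eq_bigr => e _ do rewrite inner2_ext.
by [].
Qed.

Lemma xcr3_ext_none N : xcr3 (ext N None) = xcr3 N.
Proof.
rewrite /xcr3 sum_ext_none; apply: eq_bigr => e _.
by apply: eq_bigr => y _; rewrite biso_ext andbT.
Qed.

Lemma xcr3_ext_some N d : biso N d ->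
  (xcr3 (ext N (Some d)) + \sum_(e in N) (d < e.2) =
   \sum_(y : 'I_B) (biso N y && (y < d)) + xcr3 N)%N.
Proof.
move=> hd; rewrite /xcr3 sum_ext_some -addnA -big_split; congr (_ + _)%N.
  apply: eq_bigr => y _; rewrite biso_ext.
  by case: (biso N y) => //=; case: eqP => [->|]; rewrite ?ltnn ?andbF.
apply: eq_bigr => e _.
rewrite (bigD1 d) // [in RHS](bigD1 d) //.
under eq_bigr => y /andP[_ hy] do rewrite biso_ext eq_sym hy andbT.
rewrite biso_ext hd eqxx /= add0n addnC.
by [].
Qed.

Lemma xcrm_ext_none N : xcrm (ext N None) = xcrm N.
Proof. by rewrite /xcrm xcr1_ext xcr2_ext xcr3_ext_none. Qed.

Lemma xcrm_ext_some N d : okm tn bn N -> biso N d ->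
  xcrm (ext N (Some d)) = (xcrm N + (T - #|N|) + \sum_(y : 'I_B) (biso N y && (y < d)))%N.
Proof.
move=> hN hd; rewrite /xcrm xcr1_ext xcr2_ext (card_tiso hN).
have := xcr3_ext_some hd; lia.
Qed.


End Ext.

Lemma ord_split T (x : 'I_T.+1) : x = ord_max \/ exists x', x = widen_ord (leqnSn T) x'.
Proof.
case: (ltnP x T) => h; first by right; exists (Ordinal h); apply: val_inj.
by left; apply: val_inj => /=; have := ltn_ord x; lia.
Qed.

Section Swap.
Variables (T B : nat).
Definition swp (M : {set 'I_T * 'I_B}) : {set 'I_B * 'I_T} := [set (e.2, e.1) | e in M].
Lemma swap_inj : injective (fun e : 'I_T * 'I_B => (e.2, e.1)).
Proof. by move=> [x y] [x' y'] [-> ->]. Qed.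
Lemma tiso_swp M x : tiso (swp M) x = biso M x.
Proof. by rewrite /tiso /biso forall_imset. Qed.
Lemma biso_swp M x : biso (swp M) x = tiso M x.
Proof. by rewrite /tiso /biso forall_imset. Qed.
Lemma okm_swp tn bn M : okm bn tn (swp M) = okm tn bn M.
Proof.
rewrite /okm !forall_imset /=.
under eq_forallb => x do rewrite forall_imset /=.
under eq_forallb => x do under eq_forallb => y do rewrite (inj_eq swap_inj) orbC.
congr (_ && _); apply: eq_forallb => x; by rewrite andbC.
Qed.
Lemma card_swp M : #|swp M| = #|M|.
Proof. by rewrite card_imset //; exact: swap_inj. Qed.
Lemma xcrm_swp M : xcrm (swp M) = xcrm M.
Proof.
have hi : {in M &, injective (fun e : 'I_T * 'I_B => (e.2, e.1))} by move=> x y _ _; apply: swap_inj.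
rewrite /xcrm /xcr1 /xcr2 /xcr3 !big_imset //=.
under eq_bigr => e _ do rewrite big_imset //=.
rewrite exchange_big /=.
under [X in (_ + X + _)%N]eq_bigr => e _ do under eq_bigr => x _ do rewrite tiso_swp.
under [X in (_ + _ + X)%N]eq_bigr => e _ do under eq_bigr => x _ do rewrite biso_swp.
rewrite -addnA [(_ + \sum_(i in M) _)%N]addnC addnA; congr (_ + _ + _)%N.
by apply: eq_bigr => e _; apply: eq_bigr => f _; rewrite andbC.
Qed.
End Swap.

Lemma swpK T B (M : {set 'I_T * 'I_B}) : swp (swp M) = M.
Proof.
rewrite /swp -imset_comp (eq_imset (g := id)); first by rewrite imset_id.
by move=> [x y].
Qed.

Section MSum.
Local Open Scope ring_scope.
Variables (R : fieldType) (q : R) (hq : q != 1).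
Variables (tn bn : nat).

Definition msum T B k :=
  \sum_(M : {set 'I_T * 'I_B} | okm tn bn M && (#|M| == k)) q ^+ xcrm M.

Section TopS.
Variables (T B : nat).
Hypothesis hT : (tn <= T)%N.

Lemma mem_ext_wid (N : {set 'I_T * 'I_B}) o e : (wid e \in ext N o) = (e \in N).
Proof.
case: o => [d|] /=; rewrite ?in_setU1 ?wid_max /= mem_imset //; exact: (@wid_inj T B).
Qed.

Lemma M_none (M : {set 'I_T.+1 * 'I_B}) : tiso M ord_max ->
  M = ext [set e | wid e \in M] None.
Proof.
move=> /forallP hM; apply/setP => -[x y].
case: (ord_split x) => [->|[x' ->]].
  rewrite /= (_ : (ord_max, y) \in [set wid x | x in _] = false); last first.
    by apply/negbTE/imsetP => -[e _ /(congr1 (fun p => val p.1)) /= h]; have := ltn_ord e.1; rewrite -h ltnn.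
  by apply/negbTE; apply/negP => hin; have := hM (ord_max, y); rewrite hin eqxx.
by rewrite -[(widen_ord _ x', y)]/(wid (x', y)) mem_ext_wid inE.
Qed.

Lemma M_some (M : {set 'I_T.+1 * 'I_B}) d : okm tn bn M -> (ord_max, d) \in M ->
  M = ext [set e | wid e \in M] (Some d).
Proof.
move=> /okmP [H1 _] hd; apply/setP => -[x y].
case: (ord_split x) => [->|[x' ->]]; last first.
  by rewrite -[(widen_ord _ x', y)]/(wid (x', y)) mem_ext_wid inE.
rewrite /= in_setU1 (_ : (ord_max, y) \in [set wid x | x in _] = false) ?orbF; last first.
  by apply/negbTE/imsetP => -[e _ /(congr1 (fun p => val p.1)) /= h]; have := ltn_ord e.1; rewrite -h ltnn.
apply/idP/eqP => [hin|->] //; exact: H1 _ _ hin hd (or_introl erefl).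
Qed.

Lemma msum_topS k : msum T.+1 B k.+1 =
  msum T B k.+1 + q ^+ (T - k) * qint q (B - k) * msum T B k.
Proof.
rewrite /msum (bigID (fun M => tiso M ord_max)) /=.
congr (_ + _).
  rewrite (eq_bigl (fun N : {set 'I_T * 'I_B} => N \in [set N | okm tn bn N && (#|N| == k.+1)])); last by move=> N; rewrite inE.
  under [RHS]eq_bigr => N _ do rewrite -(xcrm_ext_none N).
  rewrite -(big_imset (fun M : {set 'I_T.+1 * 'I_B} => q ^+ xcrm M) (h := fun N => ext N None)) /=; last first.
    by move=> N N' _ _ /= /(imset_inj (@wid_inj T B)).
  apply: eq_bigl => M; apply/idP/imsetP => [/andP [/andP [hok hc] ht]|[N]].
    exists [set e | wid e \in M]; last exact: M_none.
    have eM := M_none ht.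
    rewrite inE; rewrite eM okm_ext // andbT in hok; rewrite eM card_ext addn0 in hc.
    by rewrite hok hc.
  rewrite inE => /andP [hok hc] ->.
  rewrite -[[set wid x | x in N]]/(ext N None).
  by rewrite okm_ext // andbT hok card_ext addn0 hc tiso_ext_max.
transitivity (\sum_(p : {set 'I_T * 'I_B} * 'I_B | (okm tn bn p.1 && (#|p.1| == k)) && biso p.1 p.2)
   q ^+ xcrm (ext p.1 (Some p.2))).
  rewrite [RHS](eq_bigl (fun p : {set 'I_T * 'I_B} * 'I_B =>
     p \in [set p : {set 'I_T * 'I_B} * 'I_B | (okm tn bn p.1 && (#|p.1| == k)) && biso p.1 p.2])); last by move=> p; rewrite inE.
  rewrite -(big_imset (fun M : {set 'I_T.+1 * 'I_B} => q ^+ xcrm M) (h := fun p => ext p.1 (Some p.2))) /=; last first.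
    move=> [N d] [N' d'] _ _ /= h.
    have hd : d = d'.
      have : (ord_max, d) \in ext N' (Some d') by rewrite /= -h setU11.
      by rewrite /= in_setU1 (negbTE (new_notin _ _)) orbF => /eqP [].
    subst d'; congr (_, _); apply/setP => e.
    by rewrite -(mem_ext_wid N (Some d)) /= h -[(ord_max, d) |: _]/(ext N' (Some d)) mem_ext_wid.
  apply: eq_bigl => M; apply/idP/imsetP => [/andP [/andP [hok hc] /forallPn [e]]|[[N d]]].
    rewrite negb_imply negbK => /andP [he /eqP e1].
    have hd : (ord_max, e.2) \in M by rewrite -e1 -surjective_pairing.
    exists ([set e | wid e \in M], e.2); last exact: M_some.
    have eM := M_some hok hd.
    rewrite inE /=; rewrite eM okm_ext // in hok; rewrite eM card_ext addn1 eqSS in hc.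
    by case/andP: hok => -> ->; rewrite hc.
  rewrite inE /= => /andP [/andP [hok hc] hd] ->.
  rewrite -[(ord_max, d) |: _]/(ext N (Some d)).
  by rewrite okm_ext // hok hd card_ext addn1 eqSS hc tiso_ext_max.
rewrite -(pair_big_dep (fun N : {set 'I_T * 'I_B} => okm tn bn N && (#|N| == k))
  (fun N d => biso N d) (fun N d => q ^+ xcrm (ext N (Some d)))) /=.
rewrite mulr_sumr; apply: eq_bigr => N /andP [hok /eqP hc].
under eq_bigr => d hd do rewrite (xcrm_ext_some hT hok hd) exprD.
rewrite -mulr_sumr sum_rank // -(sum_bool (biso N)) (card_biso hok) hc exprD.
ring.
Qed.
End TopS.

Lemma msum_swap T B k : msum T B k = \sum_(M : {set 'I_B * 'I_T} | okm bn tn M && (#|M| == k)) q ^+ xcrm M.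
Proof.
rewrite /msum (reindex (@swp B T)) /=; last first.
  by exists (@swp T B) => M _; rewrite swpK.
apply: eq_big => M; first by rewrite okm_swp card_swp.
by rewrite xcrm_swp.
Qed.

Lemma msum0 T B : msum T B 0 = 1.
Proof.
rewrite /msum (big_pred1 set0).
  by rewrite /xcrm /xcr1 /xcr2 /xcr3 !big_set0.
move=> M /=; rewrite cards_eq0; case: eqP => [->|] /=; last by rewrite andbF.
rewrite andbT /okm; apply/andP; split; apply/forallP => e; by rewrite inE.
Qed.

Lemma msum_big T B k : (B < k)%N -> msum T B k = 0.
Proof.
move=> hk; rewrite /msum big_pred0 // => M.
apply/negbTE/andP => -[/okm_card h /eqP hc]; move: h; rewrite hc; lia.
Qed.

Lemma msum_base k : msum tn bn k = (k == 0)%:R.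
Proof.
case: k => [|k]; first by rewrite msum0.
rewrite /msum big_pred0 // => M; apply/negbTE/andP => -[/okmP [_ H2] /eqP hc].
have : M = set0.
  apply/setP => e; rewrite inE; apply/negbTE/negP => he.
  by have := H2 e he; rewrite ltn_ord ltn_ord.
by move=> h; move: hc; rewrite h cards0.
Qed.
End MSum.

Section MSum2.
Local Open Scope ring_scope.
Variables (R : fieldType) (q : R) (hq : q != 1).

Lemma msum_botS tn bn T B k : (bn <= B)%N ->
  msum q tn bn T B.+1 k.+1 =
  msum q tn bn T B k.+1 + q ^+ (B - k) * qint q (T - k) * msum q tn bn T B k.
Proof.
move=> hB; rewrite !msum_swap -![\sum_(M | okm bn tn M && _) _]/(msum q bn tn B.+1 T _).
by rewrite msum_topS.
Qed.
End MSum2.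

Section Final.
Local Open Scope ring_scope.

Lemma top_lbl_lt a j (x y : nat) : (top_lbl a j x < top_lbl a j y)%R = (x < y)%N.
Proof. rewrite /top_lbl; case: ifP => hx; case: ifP => hy; lia. Qed.

Lemma bot_lbl_lt j (x y : nat) : (bot_lbl j x < bot_lbl j y)%R = (x < y)%N.
Proof. rewrite /bot_lbl; case: ifP => hx; case: ifP => hy; lia. Qed.

Lemma top_lbl_neg a j (x : nat) : (top_lbl a j x < 0)%R = (x < a + j)%N.
Proof. rewrite /top_lbl; case: ifP => hx; lia. Qed.

Lemma bot_lbl_neg j (x : nat) : (bot_lbl j x < 0)%R = (x < j)%N.
Proof. rewrite /bot_lbl; case: ifP => hx; lia. Qed.


Lemma card_set_pair (X Y : finType) (Q : pred (X * Y)) :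
  #|[set p : X * Y | Q p]| = (\sum_(x : X) \sum_(y : Y) Q (x, y))%N.
Proof.
rewrite (pair_bigA _ (fun x y => nat_of_bool (Q (x, y)))) /=.
rewrite (eq_bigr (fun p => nat_of_bool (Q p))); last by move=> [x y].
by rewrite sum_bool; apply: eq_card => p; rewrite inE.
Qed.

Lemma matching_sumE (F : fieldType) (q : F) a n j m :
  matching_sum a n j q m = msum q (a + j) j (a + j + n) (j + n) m.
Proof.
rewrite /matching_sum /msum; apply: eq_big => M.
  rewrite /is_matching /okm; congr (_ && _ && _); apply: eq_forallb => e.
  by rewrite /top_neg /bot_neg top_lbl_neg bot_lbl_neg.
move=> _; congr (_ ^+ _); rewrite /crossing /xcrm; congr (_ + _ + _)%N.
- rewrite /Defs.cr1 card_set_pair /xcr1 [RHS]big_mkcond; apply: eq_bigr => e1 _ /=.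
  case: (e1 \in M) => /=; last by rewrite big1.
  rewrite [RHS]big_mkcond; apply: eq_bigr => e2 _ /=.
  by case: (e2 \in M) => //=; rewrite top_lbl_lt bot_lbl_lt.
- rewrite /Defs.cr2 card_set_pair /xcr2 [RHS]big_mkcond; apply: eq_bigr => e1 _ /=.
  case: (e1 \in M) => /=; last by rewrite big1.
  by apply: eq_bigr => x _ /=; rewrite top_lbl_lt.
- rewrite /Defs.cr3 card_set_pair /xcr3 [RHS]big_mkcond; apply: eq_bigr => e1 _ /=.
  case: (e1 \in M) => /=; last by rewrite big1.
  by apply: eq_bigr => x _ /=; rewrite bot_lbl_lt.
Qed.
End Final.

Section Main.
Local Open Scope ring_scope.
Variables (R : realFieldType) (q : R) (hq : q != 1) (alpha j : nat).
Definition bb := fun n : nat => q ^+ n * qint q (n + alpha + 1) + q ^+ (n + alpha) * qint q n.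
Definition ll := fun n : nat =>
    q ^ ((2 * n + alpha)%N%:Z - 1) * qint q n * qint q (n + alpha).

Lemma main_ind n m : (m <= n + j)%N ->
  msum q (alpha + j) j (alpha + j + n) (j + n) m = mot bb ll n j (n + j - m).
Proof.
elim: n m => [|n IH] m hm.
  rewrite !addn0 msum_base /=; congr (nat_of_bool _)%:R; apply/eqP/eqP; lia.
have h0 := IH 0%N (leq0n _); rewrite msum0 subn0 in h0.
rewrite !addnS addSn.
case: m hm => [|m] hm.
  rewrite msum0 subn0 mot_last /= -h0 !mot_big; try lia.
  by rewrite !mulr0 !addr0.
rewrite subSS msum_botS //; last lia.
rewrite msum_topS //; last lia.
rewrite mot_last.
have ->: msum q (alpha + j) j (alpha + j + n) (j + n) m.+1 =
   if (0 < n + j - m)%N then mot bb ll n j (n + j - m).-1 else 0.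
  case: (posnP (n + j - m)) => hl.
    by rewrite msum_big //; lia.
  rewrite IH; last lia.
  by congr (mot _ _ _ _ _); lia.
rewrite (IH m); last lia.
case: m hm => [|m] hm.
  rewrite !msum0 !subn0 -h0 [mot _ _ _ _ (n + j).+1]mot_big; last lia.
  set X := (if _ then _ else _).
  rewrite /bb (_ : (alpha + j + n = (j + n) + alpha)%N); last lia.
  rewrite (_ : ((j + n + alpha).+1 = j + n + alpha + 1)%N); last lia.
  rewrite (_ : (n + j = j + n)%N); last lia.
  ring.
rewrite msum_topS //; last lia.
rewrite (IH m); last lia.
rewrite (IH m.+1); last lia.
have -> : (n + j - m = (n + j - m.+1).+1)%N by lia.
set l := (n + j - m.+1)%N.
have e1 : (alpha + j + n - m.+1 = l + alpha)%N by rewrite /l; lia.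
have e1' : (alpha + j + n - m = l + alpha + 1)%N by rewrite /l; lia.
have e2 : (j + n - m.+1 = l)%N by rewrite /l; lia.
have e2' : (j + n - m = l + 1)%N by rewrite /l; lia.
have e3 : ((alpha + j + n).+1 - m.+1 = l + alpha + 1)%N by rewrite /l; lia.
rewrite e1 e1' e2 e2' e3 /bb /ll.
have -> : ((2 * l.+1 + alpha)%N%:Z - 1 = (l + (l + alpha + 1))%N%:Z :> int).
  lia.
rewrite -[q ^ _]/(q ^+ (l + (l + alpha + 1))) exprD.
rewrite (_ : (l.+1 = l + 1)%N); last lia.
rewrite (_ : (l + 1 + alpha = l + alpha + 1)%N); last lia.
set X := (if _ then _ else _).
set Y := mot _ _ n j l.
set Z := mot _ _ n j (l + 1).
rewrite !exprD !expr1.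
ring.
Qed.
End Main.

Local Open Scope ring_scope.

Theorem proposition2p4 (R : realFieldType) (q : R) (hq0 : 0 < q) (hq1 : q < 1)
  (alpha p j : nat) :
  let b := fun n : nat => q ^+ n * qint q (n + alpha + 1) + q ^+ (n + alpha) * qint q n in
  let lam := fun n : nat =>
    q ^ ((2 * n + alpha)%N%:Z - 1) * qint q n * qint q (n + alpha) in
  motzkin_sum b lam p j j = matching_sum alpha p j q p.
Proof.
move=> b lam.
have hq : q != 1 by rewrite lt_eqF.
rewrite motzkin_sumE matching_sumE (main_ind hq); last lia.
by rewrite (_ : (p + j - p)%N = j); last lia.
Qed.
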